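(* Let $S=s_1,\ldots,s_n$ be a sequence of positive real numbers, $\gamma>0$, $k$ a positive integer. Let $(L,\alpha,\beta)$ be an optimal solution of $\textsc{Exp}$ for $S,\gamma,k$, with $L=\ell_1,\ldots,\ell_n$, and let $g=(\prod_{i=1}^ns_i)^{1/n}$. Then \[ \sum_{i=1}^n\big(-\log\beta-\ell_i\log\alpha\big)\ge n\log g. \]
   Context: A level sequence is $L=\ell_1,\ldots,\ell_n$ of integers with $0\le\ell_i\le k$; set $\ell_0=0$. The penalty is $\mathrm{pen}(x,y)=\max(y-x,0)\,\gamma\log n$; $p_{\exp}(s;\lambda)=\lambda e^{-\lambda s}$; $\mathrm{score}_{\exp}(L,S;\alpha,\beta,\gamma)=\sum_{i=1}^n\big[-\log p_{\exp}(s_i;\beta\alpha^{\ell_i})+\mathrm{pen}(\ell_{i-1},\ell_i)\big]$. Problem $\textsc{Exp}$: given $S,\gamma,k$, find $L$ and parameters $\alpha>1$, $\beta>0$ minimizing this score. The paper assumes $s_i>0$ for this problem. *)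

(* Defs.v *)
From Stdlib Require Import Reals List.
Import ListNotations.
Open Scope R_scope.

Definition p_exp (s lam : R) : R := lam * exp (- lam * s).

(* pen(x,y) = max(y - x, 0) * gamma * log n ; levels are naturals, so the
   truncated subtraction (y - x)%nat is exactly max(y - x, 0). *)
Definition pen (gamma : R) (n : nat) (x y : nat) : R :=
  INR (y - x)%nat * gamma * ln (INR n).

Fixpoint score_aux (gamma : R) (n : nat) (alpha beta : R)
    (prev : nat) (L : list nat) (S : list R) : R :=
  match L, S with
  | l :: L', s :: S' =>
      - ln (p_exp s (beta * alpha ^ l)) + pen gamma n prev l
      + score_aux gamma n alpha beta l L' S'
  | _, _ => 0
  end.

Definition score_exp (L : list nat) (S : list R) (alpha beta gamma : R) : R :=
  score_aux gamma (length S) alpha beta 0%nat L S.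

Definition feasible_exp (S : list R) (k : nat) (L : list nat) (alpha beta : R) : Prop :=
  length L = length S /\ Forall (fun l => (l <= k)%nat) L /\ 1 < alpha /\ 0 < beta.

Definition optimal_exp (S : list R) (gamma : R) (k : nat)
    (L : list nat) (alpha beta : R) : Prop :=
  feasible_exp S k L alpha beta /\
  forall (L' : list nat) (alpha' beta' : R),
    feasible_exp S k L' alpha' beta' ->
    score_exp L S alpha beta gamma <= score_exp L' S alpha' beta' gamma.

Definition sumR (l : list R) : R := fold_right Rplus 0 l.
Definition prodR (l : list R) : R := fold_right Rmult 1 l.

Definition geo_mean (S : list R) : R :=
  Rpower (prodR S) (/ INR (length S)).

(* Main.v *)
Require Import Defs.
From Stdlib Require Import Reals List Lra Lia.
Open Scope R_scope.

Lemma ln_le_xm1 x : 0 < x -> ln x <= x - 1.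
Proof.
  intro Hx. destruct (Req_dec (x - 1) 0) as [E|E].
  - replace x with 1 by lra. rewrite ln_1. lra.
  - pose proof (exp_ineq1 _ E).
    left. rewrite <- (ln_exp (x - 1)). apply ln_increasing; lra.
Qed.

Fixpoint Xs (a b : R) (L : list nat) (S : list R) : R :=
  match L, S with
  | l :: L', s :: S' => b * a ^ l * s + Xs a b L' S'
  | _, _ => 0 end.

Fixpoint Ls (a b : R) (L : list nat) (S : list R) : R :=
  match L, S with
  | l :: L', s :: S' => ln (b * a ^ l * s) + Ls a b L' S'
  | _, _ => 0 end.

Lemma score_scale g n a b c prev L S :
  0 < a -> 0 < b -> 0 < c -> length L = length S ->
  score_aux g n a (c * b) prev L S =
  score_aux g n a b prev L S - INR (length L) * ln c + (c - 1) * Xs a b L S.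
Proof.
  intros Ha Hb Hc. revert prev S. induction L as [|l L IH]; intros prev [|s S] HL;
    simpl in *; try discriminate.
  - lra.
  - injection HL as HL. rewrite IH by exact HL.
    unfold p_exp.
    assert (P : 0 < b * a ^ l) by (apply Rmult_lt_0_compat; [lra| apply pow_lt; lra]).
    assert (P' : 0 < c * b * a ^ l) by (apply Rmult_lt_0_compat; [nra| apply pow_lt; lra]).
    rewrite !ln_mult, !ln_exp; try apply exp_pos; try lra.
    + destruct (length L); simpl; ring.
    + apply pow_lt; lra.
    + nra.
    + apply pow_lt; lra.
Qed.

Lemma Ls_le L S a b : 0 < a -> 0 < b -> Forall (fun s => 0 < s) S ->
  length L = length S ->
  Ls a b L S <= Xs a b L S - INR (length L).
Proof.
  intros Ha Hb. revert S. induction L as [|l L IH]; intros [|s S] HS HL; cbn [Ls Xs length] in *;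
    try discriminate.
  - simpl; lra.
  - inversion HS; subst. rewrite S_INR. injection HL as HL.
    pose proof (IH S H2 HL) as IH'.
    assert (Hp : 0 < b * a ^ l * s).
    { apply Rmult_lt_0_compat; [apply Rmult_lt_0_compat; [lra| apply pow_lt; lra]|lra]. }
    pose proof (ln_le_xm1 _ Hp). lra.
Qed.

Lemma Xs_pos L S a b : 0 < a -> 0 < b -> Forall (fun s => 0 < s) S ->
  length L = length S -> (0 < length L)%nat -> 0 < Xs a b L S.
Proof.
  intros Ha Hb. revert S. induction L as [|l L IH]; intros [|s S] HS HL Hn; simpl in *;
    try discriminate; try lia.
  inversion HS; subst. injection HL as HL.
  assert (0 < b * a ^ l * s).
  { apply Rmult_lt_0_compat; [apply Rmult_lt_0_compat; [lra| apply pow_lt; lra]|lra]. }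
  destruct L as [|l' L].
  - destruct S; simpl in *; try discriminate. lra.
  - pose proof (IH S H2 HL ltac:(simpl; lia)). lra.
Qed.

Lemma prod_pos S : Forall (fun s => 0 < s) S -> 0 < prodR S.
Proof. induction 1; simpl; [lra|]. apply Rmult_lt_0_compat; auto. Qed.

Lemma ln_prod S : Forall (fun s => 0 < s) S -> ln (prodR S) = sumR (map ln S).
Proof.
  induction 1; simpl. - apply ln_1.
  - rewrite ln_mult; auto. + rewrite IHForall; auto. + apply prod_pos; auto.
Qed.

Lemma sum_rel L S a b : 0 < a -> 0 < b -> Forall (fun s => 0 < s) S ->
  length L = length S ->
  sumR (map (fun l => - ln b - INR l * ln a) L) = - Ls a b L S + sumR (map ln S).
Proof.
  intros Ha Hb. revert S. induction L as [|l L IH]; intros [|s S] HS HL; simpl in *;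
    try discriminate.
  - lra.
  - inversion HS; subst. injection HL as HL. unfold sumR in *. rewrite (IH S) by auto.
    rewrite !ln_mult; try lra; try (apply pow_lt; lra);
      try (apply Rmult_lt_0_compat; [lra| apply pow_lt; lra]).
    rewrite ln_pow by lra. ring.
Qed.

Theorem lemma9 (S : list R) (gamma : R) (k : nat) (L : list nat) (alpha beta : R) :
  Forall (fun s => 0 < s) S ->
  0 < gamma ->
  (0 < k)%nat ->
  optimal_exp S gamma k L alpha beta ->
  sumR (map (fun l => - ln beta - INR l * ln alpha) L)
    >= INR (length S) * ln (geo_mean S).
Proof.
  intros HS Hg Hk [[HL [HF [Ha Hb]]] Hopt].
  destruct (length S) as [|n] eqn:En.
  - destruct L; simpl in *; try discriminate. unfold sumR; simpl. lra.
  - unfold geo_mean. rewrite En, ln_Rpower, ln_prod by auto.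
    assert (HnR : 0 < INR (Datatypes.S n)) by (apply lt_0_INR; lia).
    rewrite sum_rel with (S := S) by (auto; try lra; congruence).
    replace (INR (Datatypes.S n) * (/ INR (Datatypes.S n) * sumR (map ln S))) with (sumR (map ln S))
      by (field; lra).
    set (X := Xs alpha beta L S).
    assert (HX : 0 < X) by (apply Xs_pos; auto; try lra; try congruence; rewrite HL; lia).
    assert (Xle : X <= INR (Datatypes.S n)).
    { destruct (Rle_dec X (INR (Datatypes.S n))) as [h|h]; [exact h|exfalso].
      set (c := INR (Datatypes.S n) / X).
      assert (Hc : 0 < c) by (unfold c; apply Rdiv_lt_0_compat; lra).
      pose proof (Hopt L alpha (c * beta)
        (conj (eq_trans HL (eq_sym En)) (conj HF (conj Ha (Rmult_lt_0_compat _ _ Hc Hb))))) as O.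
      unfold score_exp in O. rewrite score_scale in O by (auto; try lra; congruence).
      rewrite HL in O; rewrite ?En in O. fold X in O.
      set (m := X / INR (Datatypes.S n)) in *.
      assert (Hm : 1 < m) by (unfold m; apply Rlt_gt, Rmult_lt_reg_r with (INR (Datatypes.S n)); auto;
        unfold Rdiv; rewrite Rmult_assoc, Rinv_l; lra).
      assert (cm : c = / m) by (unfold c, m; field; lra).
      assert (Xm : X = m * INR (Datatypes.S n)) by (unfold m; field; lra).
      rewrite cm, ln_Rinv in O by lra.
      assert (E1 : (/ m - 1) * X = INR (Datatypes.S n) * (1 - m)).
      { rewrite Xm. field. lra. }
      rewrite E1 in O.
      assert (ln m >= m - 1) by nra.
      pose proof (exp_ineq1 (m - 1) ltac:(lra)).
      assert (ln m < m - 1).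
      { rewrite <- (ln_exp (m - 1)). apply ln_increasing; lra. }
      lra. }
    pose proof (Ls_le L S alpha beta ltac:(lra) Hb HS ltac:(congruence)). rewrite HL in H. fold X in H.
    lra.
Qed.
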